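(* Let $w$ be an instance of MAXCUT on $n$ vertices and let $(S,\bar S)$ be a maximal cut of $w$ with $\xi(x)\ge\gamma\,\iota(x)$ for every vertex $x$, where $\gamma>\frac{2}{1-\sqrt{1-h(w_{cut})^2}}$. Then the matrix $W+D'$ is positive semidefinite of rank $n-1$.
   Context: An instance of MAXCUT is a vertex set $V=\{1,\dots,n\}$ with a symmetric $w:V\times V\to[0,\infty)$ with zero diagonal and connected support; $W$ is the matrix $W_{ij}=w(i,j)$. A cut $(S,\bar S)$ is maximal if $\sum_{a\in S,b\in\bar S}w(a,b)$ is maximum. For the cut: $\xi(x)$ is the total weight of edges at $x$ crossing the cut, $\iota(x)$ the total weight of edges at $x$ not crossing it. $w_{cut}(u,v)=w(u,v)$ if $u,v$ are on opposite sides of the cut and $0$ otherwise; $w_{uncut}=w-w_{cut}$; $W^{cut},W^{uncut}$ are the corresponding matrices. $D^{cut},D^{uncut}$ are diagonal with $D^{cut}_{ii}=\sum_jW^{cut}_{ij}$, $D^{uncut}_{ii}=\sum_jW^{uncut}_{ij}$, and $D'=D^{cut}-D^{uncut}$. For a weight function $u$, $\tau_u(A)=\sum_{a\in A,b\notin A}u(a,b)$, $\mu_u(A)=\sum_{a\in A,v\in V}u(a,v)$ and the Cheeger constant is $h(u)=\min_{\emptyset\ne A\subsetneq V}\frac{\tau_u(A)}{\min\{\mu_u(A),\mu_u(\bar A)\}}$. *)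

(* Defs.v *)
From HB Require Import structures.
From mathcomp Require Import all_boot all_order all_algebra.
Set Implicit Arguments. Unset Strict Implicit. Unset Printing Implicit Defensive.
Import Order.TTheory GRing.Theory Num.Theory.
Local Open Scope ring_scope.

Section Defs.
Variables (R : rcfType) (n : nat).
Implicit Types (W : 'M[R]_n) (S A : {set 'I_n}).

Definition maxcut_instance W : Prop :=
  [/\ forall i j, W i j = W j i,
      forall i j, 0 <= W i j,
      forall i, W i i = 0 &
      forall i j, connect (fun a b => 0 < W a b) i j].

Definition cut_value W S : R := \sum_(a in S) \sum_(b in ~: S) W a b.

Definition is_max_cut W S : Prop := forall T, cut_value W T <= cut_value W S.

Definition crosses S (i j : 'I_n) : bool := (i \in S) != (j \in S).

Definition Wcut W S : 'M[R]_n := \matrix_(i, j) (if crosses S i j then W i j else 0).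
Definition Wuncut W S : 'M[R]_n := W - Wcut W S.

Definition xi W S (x : 'I_n) : R := \sum_j Wcut W S x j.
Definition iota_w W S (x : 'I_n) : R := \sum_j Wuncut W S x j.

Definition Dcut W S : 'M[R]_n := diag_mx (\row_i \sum_j Wcut W S i j).
Definition Duncut W S : 'M[R]_n := diag_mx (\row_i \sum_j Wuncut W S i j).
Definition Dprime W S : 'M[R]_n := Dcut W S - Duncut W S.

Definition tau (U : 'M[R]_n) A : R := \sum_(a in A) \sum_(b in ~: A) U a b.
Definition mu (U : 'M[R]_n) A : R := \sum_(a in A) \sum_v U a v.

(* The initial
   value 1 of the iterated min is harmless: every ratio is <= 1 whenever the
   denominators are positive (tau <= mu), and for n <= 1 there is no proper
   nonempty subset. *)
Definition cheeger (U : 'M[R]_n) : R :=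
  \big[Num.min/1]_(A : {set 'I_n} | (A != set0) && (A != setT))
     (tau U A / Num.min (mu U A) (mu U (~: A))).

Definition psd (M : 'M[R]_n) : Prop :=
  forall v : 'cV[R]_n, 0 <= (v^T *m M *m v) 0 0.

End Defs.

(* Main.v *)
Require Import Defs.
From HB Require Import structures.
From mathcomp Require Import all_boot all_order all_algebra.
From mathcomp Require Import ring lra zify.
Set Implicit Arguments. Unset Strict Implicit. Unset Printing Implicit Defensive.
Import Order.TTheory GRing.Theory Num.Theory.
Local Open Scope ring_scope.

Section Gen.
Variables (R : rcfType) (n : nat) (U : 'M[R]_n).
Hypotheses (Usym : forall i j, U i j = U j i) (Uge0 : forall i j, 0 <= U i j).

Definition ind (A : {set 'I_n}) i : R := (i \in A)%:R.
Definition deg i := \sum_j U i j.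

Lemma ind01 (A : {set 'I_n}) i : ind A i = 0 \/ ind A i = 1.
Proof. by rewrite /ind; case: (i \in A); [right|left]. Qed.

Lemma ind_ge0 (A : {set 'I_n}) i : 0 <= ind A i.
Proof. by rewrite /ind ler0n. Qed.

Lemma deg_ge0 i : 0 <= deg i.
Proof. by apply: sumr_ge0 => j _. Qed.

Lemma muE (A : {set 'I_n}) : mu U A = \sum_i ind A i * deg i.
Proof.
rewrite /mu big_mkcond; apply eq_bigr => i _; rewrite /ind /deg.
by case: (i \in A); rewrite ?mul1r ?mul0r.
Qed.

Lemma mu_ge0 (A : {set 'I_n}) : 0 <= mu U A.
Proof. rewrite muE; apply: sumr_ge0 => i _; exact: mulr_ge0 (ind_ge0 _ _) (deg_ge0 _). Qed.

Lemma muT : mu U setT = \sum_i deg i.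
Proof. by rewrite muE; apply eq_bigr => i _; rewrite /ind in_setT mul1r. Qed.

Lemma muC (A : {set 'I_n}) : mu U A + mu U (~:A) = \sum_i deg i.
Proof.
rewrite !muE -big_split /=; apply eq_bigr => i _; rewrite /ind in_setC.
by case: (i \in A); rewrite /= ?mul1r ?mul0r ?addr0 ?add0r.
Qed.

Lemma mu_mono (A B : {set 'I_n}) : A \subset B -> mu U A <= mu U B.
Proof.
move=> /subsetP AB; rewrite !muE; apply: ler_sum => i _.
apply: ler_wpM2r; first exact: deg_ge0.
rewrite /ind; case iA: (i \in A); last by rewrite ler0n.
by rewrite (AB _ iA).
Qed.

Lemma crossesC (A : {set 'I_n}) i j : crosses (~:A) i j = crosses A i j.
Proof. by rewrite /crosses !in_setC; case: (i \in A); case: (j \in A). Qed.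

Lemma crosses_sym (A : {set 'I_n}) i j : crosses A i j = crosses A j i.
Proof. by rewrite /crosses; case: (i \in A); case: (j \in A). Qed.

Lemma tauE (A : {set 'I_n}) : 2 * tau U A = \sum_i \sum_j (crosses A i j)%:R * U i j.
Proof.
have E1 : tau U A = \sum_i \sum_j ind A i * (1 - ind A j) * U i j.
  rewrite /tau big_mkcond; apply eq_bigr => i _.
  rewrite /ind; case: (i \in A); last by rewrite big1 // => j _; rewrite !mul0r.
  rewrite big_mkcond; apply eq_bigr => j _; rewrite in_setC.
  by case: (j \in A); rewrite /= ?subrr ?mulr0 ?mul0r ?subr0 ?mul1r.
have E2 : tau U A = \sum_i \sum_j (1 - ind A i) * ind A j * U i j.
  rewrite E1 exchange_big /=; apply eq_bigr => i _; apply eq_bigr => j _.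
  by rewrite Usym; ring.
rewrite mulr2n mulrDl mul1r {1}E1 E2 -big_split /=; apply eq_bigr => i _.
rewrite -big_split /=; apply eq_bigr => j _; rewrite -mulrDl; congr (_ * _).
by rewrite /ind /crosses; case: (i \in A); case: (j \in A) => /=; ring.
Qed.

Lemma tau_ge0 (A : {set 'I_n}) : 0 <= tau U A.
Proof.
have : 0 <= 2 * tau U A.
  rewrite tauE; apply: sumr_ge0 => i _; apply: sumr_ge0 => j _.
  exact: mulr_ge0 (ler0n _ _) (Uge0 _ _).
by rewrite pmulr_rge0.
Qed.

Lemma tauC (A : {set 'I_n}) : tau U (~:A) = tau U A.
Proof.
have : 2 * tau U (~:A) = 2 * tau U A.
  by rewrite !tauE; apply eq_bigr => i _; apply eq_bigr => j _; rewrite crossesC.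
by move=> H; apply: (mulfI _ H); rewrite pnatr_eq0.
Qed.

Lemma tau_le_mu (A : {set 'I_n}) : tau U A <= mu U A.
Proof.
rewrite /tau /mu; apply: ler_sum => i _.
rewrite [X in _ <= X](bigID (fun j => j \in ~:A)) /= lerDl.
apply: sumr_ge0 => j _; exact: Uge0.
Qed.


Lemma h_ge0 : 0 <= cheeger U.
Proof.
rewrite /cheeger; elim/big_rec: _ => // A x _ hx; rewrite le_min hx andbT.
apply: divr_ge0; first exact: tau_ge0.
by rewrite le_min !mu_ge0.
Qed.

Lemma h_le1 : cheeger U <= 1.
Proof. by rewrite /cheeger; elim/big_rec: _ => // A x _ hx; rewrite ge_min hx orbT. Qed.

Lemma h_le (A : {set 'I_n}) : A != set0 -> A != setT ->
  cheeger U <= tau U A / Num.min (mu U A) (mu U (~:A)).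
Proof.
move=> A0 AT; rewrite /cheeger (bigD1 A) /=; last by rewrite A0 AT.
by rewrite ge_min lexx.
Qed.

Lemma cheeger_le (A : {set 'I_n}) : A != set0 -> 2 * mu U A <= mu U setT ->
  cheeger U * mu U A <= tau U A.
Proof.
move=> A0 H; have hm := muC A; rewrite -muT in hm.
have g1 := mu_ge0 A; have g2 := mu_ge0 (~:A).
case: (eqVneq A setT) => [EA | AT].
  have -> : mu U A = 0 by apply/eqP; rewrite eq_le g1 andbT; move: H; rewrite EA; lra.
  by rewrite mulr0 tau_ge0.
have mn : Num.min (mu U A) (mu U (~:A)) = mu U A by apply/min_idPl; lra.
have := h_le A0 AT; rewrite mn.
case: (eqVneq (mu U A) 0) => [->| nz]; first by rewrite mulr0 tau_ge0.
by rewrite ler_pdivlMr // lt0r nz g1.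
Qed.

Lemma coarea k : forall f : 'I_n -> R, (#|[set i | (0 < f i)%R]| <= k)%N ->
  (forall i, 0 <= f i) -> 2 * mu U [set i | 0 < f i] <= mu U setT ->
  2 * cheeger U * \sum_i deg i * f i <= \sum_i \sum_j U i j * `|f i - f j|.
Proof.
elim: k => [|k IH] f Hc f0 Hmu.
  move: Hc; rewrite leqn0 => /eqP/cards0_eq A0.
  have fz : forall i, f i = 0.
    move=> i; apply/eqP; rewrite eq_le f0 andbT leNgt; apply/negP => fi.
    have : i \in [set i | 0 < f i] by rewrite inE.
    by rewrite A0 inE.
  rewrite big1 ?mulr0; last by move=> i _; rewrite fz mulr0.
  by apply: sumr_ge0 => i _; apply: sumr_ge0 => j _; apply: mulr_ge0.
set A := [set i | 0 < f i] in Hc Hmu *.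
case: (eqVneq A set0) => [A0|].
  have fz : forall i, f i = 0.
    move=> i; apply/eqP; rewrite eq_le f0 andbT leNgt; apply/negP => fi.
    have : i \in A by rewrite inE.
    by rewrite A0 inE.
  rewrite big1 ?mulr0; last by move=> i _; rewrite fz mulr0.
  by apply: sumr_ge0 => i _; apply: sumr_ge0 => j _; apply: mulr_ge0.
case/set0Pn => i0 i0A.
case: (@arg_minP _ R _ i0 (mem A) f i0A) => im imA immin.
set m := f im.
have imA' : im \in A := imA.
have m0 : 0 < m by move: imA'; rewrite inE.
have fA : forall i, i \in A -> m <= f i by move=> i iA; exact: immin.
have fnA : forall i, i \notin A -> f i = 0.
  move=> i; rewrite inE => fi; apply/eqP; rewrite eq_le f0 andbT.
  by rewrite leNgt.
pose g i := f i - m * ind A i.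
have gA : forall i, i \in A -> g i = f i - m by move=> i iA; rewrite /g /ind iA mulr1.
have gnA : forall i, i \notin A -> g i = 0.
  by move=> i iA; rewrite /g /ind (negbTE iA) mulr0 subr0 fnA.
have g0 : forall i, 0 <= g i.
  move=> i; case iA: (i \in A); first by rewrite gA // subr_ge0 fA.
  by rewrite gnA ?iA.
have sub : [set i | 0 < g i] \subset A.
  apply/subsetP => i; rewrite inE => gi; apply/negPn/negP => iA.
  by move: gi; rewrite gnA // ltxx.
have Hcg : (#|[set i | (0 < g i)%R]| <= k)%N.
  have : [set i | 0 < g i] \proper A.
    apply/properP; split => //; exists im => //.
    by rewrite inE gA // subrr ltxx.
  move/proper_card => lt; rewrite -ltnS; exact: leq_trans lt Hc.
have Hmug : 2 * mu U [set i | 0 < g i] <= mu U setT.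
  apply: le_trans Hmu; rewrite ler_pM2l //; exact: mu_mono.
have IHg := IH g Hcg g0 Hmug.
have E1 : \sum_i deg i * f i = m * mu U A + \sum_i deg i * g i.
  rewrite muE mulr_sumr -big_split /=; apply eq_bigr => i _; rewrite /g; ring.
have E2 : \sum_i \sum_j U i j * `|f i - f j| =
   m * (2 * tau U A) + \sum_i \sum_j U i j * `|g i - g j|.
  rewrite tauE mulr_sumr -big_split /=; apply eq_bigr => i _.
  rewrite mulr_sumr -big_split /=; apply eq_bigr => j _.
  rewrite /crosses; case iA: (i \in A); case jA: (j \in A) => /=.
  - rewrite ?mulr0n ?mulr1n !gA //.
    have -> : f i - m - (f j - m) = f i - f j by ring.
    ring.
  - rewrite ?mulr0n ?mulr1n (gA i) // (gnA j) ?jA // (fnA j) ?jA // !subr0 !ger0_norm; first ring.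
      by rewrite subr_ge0 fA.
    by apply: le_trans (fA _ iA); exact: ltW.
  - rewrite ?mulr0n ?mulr1n (gA j) // (gnA i) ?iA // (fnA i) ?iA // !sub0r !normrN !ger0_norm; first ring.
      by rewrite subr_ge0 fA.
    by apply: le_trans (fA _ jA); exact: ltW.
  - rewrite ?mulr0n ?mulr1n (gnA i) ?iA // (gnA j) ?jA // (fnA i) ?iA // (fnA j) ?jA //; ring.
rewrite E1 E2 mulrDr.
have hc := cheeger_le (A:=A) (ltac:(apply/set0Pn; by exists i0)) Hmu.
apply: lerD => //.
have : 2 * m * (cheeger U * mu U A) <= 2 * m * tau U A.
  by apply: ler_wpM2l => //; apply: mulr_ge0 => //; exact: ltW.
move=> H.
rewrite (_ : 2 * cheeger U * (m * mu U A) = 2 * m * (cheeger U * mu U A)); last by ring.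
by rewrite (_ : m * (2 * tau U A) = 2 * m * tau U A); last by ring.
Qed.


Lemma sum3 (a b c : R) (F G H : 'I_n -> 'I_n -> R) :
  \sum_i \sum_j (a * F i j + b * G i j + c * H i j) =
  a * (\sum_i \sum_j F i j) + b * (\sum_i \sum_j G i j) + c * (\sum_i \sum_j H i j).
Proof.
rewrite !mulr_sumr -!big_split /=; apply eq_bigr => i _.
by rewrite !mulr_sumr -!big_split.
Qed.

Lemma dsum_ge0 (F : 'I_n -> 'I_n -> R) : (forall i j, 0 <= F i j) ->
  0 <= \sum_i \sum_j F i j.
Proof. by move=> H; apply: sumr_ge0 => i _; apply: sumr_ge0 => j _. Qed.

Lemma dsum_eq0 (F : 'I_n -> 'I_n -> R) : (forall i j, 0 <= F i j) ->
  \sum_i \sum_j F i j = 0 -> forall i j, F i j = 0.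
Proof.
move=> H E i j.
have Ei : \sum_j F i j = 0.
  by apply: (psumr_eq0P _ E) => // k _; apply: sumr_ge0 => l _.
by apply: (psumr_eq0P _ Ei) => // k _.
Qed.

Lemma CS (x y : 'I_n -> 'I_n -> R) :
  (\sum_i \sum_j U i j * (x i j * y i j)) ^+ 2 <=
  (\sum_i \sum_j U i j * x i j ^+ 2) * (\sum_i \sum_j U i j * y i j ^+ 2).
Proof.
set X := \sum_i \sum_j U i j * x i j ^+ 2.
set Y := \sum_i \sum_j U i j * y i j ^+ 2.
set Z := \sum_i \sum_j U i j * (x i j * y i j).
have X0 : 0 <= X by apply: dsum_ge0 => i j; apply: mulr_ge0 => //; exact: sqr_ge0.
have E : \sum_i \sum_j U i j * (x i j * Z - y i j * X) ^+ 2 = X * (X * Y - Z ^+ 2).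
  transitivity (\sum_i \sum_j (Z ^+ 2 * (U i j * x i j ^+ 2) + (- (2 * Z * X)) * (U i j * (x i j * y i j))
       + X ^+ 2 * (U i j * y i j ^+ 2))).
    by apply eq_bigr => i _; apply eq_bigr => j _; ring.
  rewrite sum3 -/X -/Y -/Z; ring.
have P : 0 <= X * (X * Y - Z ^+ 2).
  rewrite -E; apply: dsum_ge0 => i j; apply: mulr_ge0 => //; exact: sqr_ge0.
case: (eqVneq X 0) => [X00 | Xn0].
  have Z0 : Z = 0.
    rewrite /Z big1 // => i _; rewrite big1 // => j _.
    have H0 := dsum_eq0 (F := fun i j => U i j * x i j ^+ 2)
       (fun i j => mulr_ge0 (Uge0 i j) (sqr_ge0 _)) X00 i j.
    simpl in H0.
    apply/eqP; rewrite -sqrf_eq0.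
    have -> : (U i j * (x i j * y i j)) ^+ 2 = (U i j * x i j ^+ 2) * (U i j * y i j ^+ 2) by ring.
    by rewrite H0 mul0r.
  by rewrite Z0 X00 expr0n /= mul0r.
have Xp : 0 < X by rewrite lt0r Xn0 X0.
by move: P; rewrite pmulr_rge0 // subr_ge0.
Qed.

Lemma sum_symL (F : 'I_n -> R) : \sum_i \sum_j U i j * F i = \sum_i deg i * F i.
Proof. by apply eq_bigr => i _; rewrite /deg mulr_suml. Qed.

Lemma sum_symR (F : 'I_n -> R) : \sum_i \sum_j U i j * F j = \sum_i deg i * F i.
Proof.
rewrite exchange_big /=; apply eq_bigr => i _; rewrite /deg mulr_suml.
by apply eq_bigr => j _; rewrite Usym.
Qed.

Lemma chung (g : 'I_n -> R) : (forall i, 0 <= g i) ->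
  2 * mu U [set i | 0 < g i] <= mu U setT ->
  2 * (1 - Num.sqrt (1 - cheeger U ^+ 2)) * (\sum_i deg i * g i ^+ 2) <=
  \sum_i \sum_j U i j * (g i - g j) ^+ 2.
Proof.
move=> g0 Hmu.
set h := cheeger U.
set B := \sum_i deg i * g i ^+ 2.
set A := \sum_i \sum_j U i j * (g i - g j) ^+ 2.
set C := \sum_i \sum_j U i j * (g i + g j) ^+ 2.
have B0 : 0 <= B by apply: sumr_ge0 => i _; apply: mulr_ge0; [exact: deg_ge0|exact: sqr_ge0].
have A0 : 0 <= A by apply: dsum_ge0 => i j; apply: mulr_ge0 => //; exact: sqr_ge0.
have CE : C = 4 * B - A.
  have : C + A = 2 * (\sum_i \sum_j U i j * g i ^+ 2) + 2 * (\sum_i \sum_j U i j * g j ^+ 2).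
    rewrite /C /A -big_split /= !mulr_sumr -big_split /=; apply eq_bigr => i _.
    rewrite -big_split /= ?mulr_sumr -big_split /=; apply eq_bigr => j _; ring.
  rewrite sum_symL sum_symR -/B => H.
  have -> : C = (C + A) - A by ring.
  rewrite H; ring.
have supp : [set i | 0 < g i ^+ 2] = [set i | 0 < g i].
  apply/setP => i; rewrite !inE.
  have := g0 i; rewrite le_eqVlt => /orP [/eqP <- | gp].
    by rewrite expr0n /= ltxx.
  by rewrite gp exprn_gt0.
have Hco := coarea (k := #|[set i | (0 < g i ^+ 2)%R]|) (f := fun i => g i ^+ 2) (leqnn _)
   (fun i => sqr_ge0 _) (ltac:(by rewrite supp)).
simpl in Hco.
set Z := \sum_i \sum_j U i j * (`|g i - g j| * `|g i + g j|).
have ZE : \sum_i \sum_j U i j * `|g i ^+ 2 - g j ^+ 2| = Z.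
  apply eq_bigr => i _; apply eq_bigr => j _; rewrite -normrM; congr (_ * `|_|); ring.
rewrite ZE -/B -/h in Hco.
have HCS := CS (fun i j => `|g i - g j|) (fun i j => `|g i + g j|).
simpl in HCS; rewrite -/Z in HCS.
have E1 : \sum_i \sum_j U i j * `|g i - g j| ^+ 2 = A.
  by apply eq_bigr => i _; apply eq_bigr => j _; rewrite real_normK // num_real.
have E2 : \sum_i \sum_j U i j * `|g i + g j| ^+ 2 = C.
  by apply eq_bigr => i _; apply eq_bigr => j _; rewrite real_normK // num_real.
rewrite E1 E2 CE in HCS.
have h0 : 0 <= h := h_ge0.
have h1 : h <= 1 := h_le1.
have hB : 0 <= 2 * h * B by apply: mulr_ge0 => //; apply: mulr_ge0.
have K : (2 * h * B) ^+ 2 <= A * (4 * B - A).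
  apply: (le_trans _ HCS); rewrite ler_sqr //; exact: (le_trans hB Hco).
set s := Num.sqrt (1 - h ^+ 2).
have s0 : 0 <= s := sqrtr_ge0 _.
have s2 : s ^+ 2 = 1 - h ^+ 2.
  rewrite sqr_sqrtr // subr_ge0; rewrite -(expr1n _ 2) ler_sqr //; exact: ler01.
rewrite leNgt; apply/negP => Hlt.
have P1 : 0 < 2 * B - A - 2 * s * B by lra.
have P2 : 0 < 2 * B - A + 2 * s * B.
  have : 0 <= s * B by apply: mulr_ge0.
  lra.
have := mulr_gt0 P1 P2.
have -> : (2 * B - A - 2 * s * B) * (2 * B - A + 2 * s * B) = (2 * B - A) ^+ 2 - 4 * s ^+ 2 * B ^+ 2 by ring.
rewrite s2.
move: K; rewrite !exprMn.
move=> K H.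
have E : (2 * B - A) ^+ 2 - 4 * (1 - h ^+ 2) * B ^+ 2 = 2 ^+ 2 * h ^+ 2 * B ^+ 2 - A * (4 * B - A) by ring.
rewrite E in H; lra.
Qed.


Lemma mu0 : mu U set0 = 0.
Proof. by rewrite /mu big_set0. Qed.

Lemma median (u : 'I_n -> R) (i0 : 'I_n) : exists c,
  2 * mu U [set i | c < u i] <= mu U setT /\ 2 * mu U [set i | u i < c] <= mu U setT.
Proof.
have T0 : 0 <= mu U setT := mu_ge0 _.
case: (@arg_maxP _ R _ i0 predT u isT) => km _ kmmax.
pose P k := 2 * mu U [set i | u k < u i] <= mu U setT.
have Pkm : P km.
  rewrite /P (_ : [set i | u km < u i] = set0) ?mu0 ?mulr0 //.
  apply/setP => i; rewrite !inE ltNge; by have -> : u i <= u km by exact: kmmax.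
case: (@arg_minP _ R _ km (fun k => P k) u Pkm) => k Pk kmin.
exists (u k); split => //.
rewrite leNgt; apply/negP => H.
set L := [set i | u i < u k] in H.
case: (eqVneq L set0) => [L0 | ].
  by move: H; rewrite L0 mu0 mulr0 ltNge T0.
case/set0Pn => j0 j0L.
case: (@arg_maxP _ R _ j0 (mem L) u j0L) => k' k'L k'max.
have k'L' : k' \in L := k'L.
have lt' : u k' < u k by move: k'L'; rewrite inE.
have Pk' : P k'.
  rewrite /P (_ : [set i | u k' < u i] = ~: L).
    have := muC L; rewrite -muT => E; lra.
  apply/setP => i; rewrite !inE.
  case: (ltP (u i) (u k)) => hi.
    have iL : i \in L by rewrite inE.
    by apply/negbTE; rewrite -leNgt; apply: k'max.
  exact: lt_le_trans lt' hi.
have := kmin k' Pk'.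
by rewrite leNgt lt'.
Qed.


Lemma spectral (u : 'I_n -> R) (i0 : 'I_n) : exists c,
  2 * (1 - Num.sqrt (1 - cheeger U ^+ 2)) * (\sum_i deg i * (u i - c) ^+ 2) <=
  \sum_i \sum_j U i j * (u i - u j) ^+ 2.
Proof.
have [c [H1 H2]] := median u i0.
exists c.
pose g i := u i - c.
pose p i := if 0 < g i then g i else 0.
pose q i := if g i < 0 then - g i else 0.
have p0 : forall i, 0 <= p i by move=> i; rewrite /p; case: ifP => // /ltW.
have q0 : forall i, 0 <= q i.
  by move=> i; rewrite /q; case: ifP => // /ltW; rewrite oppr_ge0.
have sp : [set i | 0 < p i] = [set i | c < u i].
  apply/setP => i; rewrite !inE /p /g; case: ifP => H.
    by rewrite H -subr_gt0.
  by rewrite ltxx -subr_gt0 H.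
have sq : [set i | 0 < q i] = [set i | u i < c].
  apply/setP => i; rewrite !inE /q /g; case: ifP => H.
    by rewrite oppr_gt0 H -subr_lt0.
  by rewrite ltxx -subr_lt0 H.
have Cp := chung p0 (ltac:(by rewrite sp)).
have Cq := chung q0 (ltac:(by rewrite sq)).
set lam := 1 - Num.sqrt (1 - cheeger U ^+ 2) in Cp Cq *.
have Bsplit : \sum_i deg i * (u i - c) ^+ 2 = \sum_i deg i * p i ^+ 2 + \sum_i deg i * q i ^+ 2.
  rewrite -big_split /=; apply eq_bigr => i _; rewrite -mulrDr; congr (_ * _).
  rewrite /p /q; case: (ltgtP (g i) 0) => hi; rewrite /g in hi *; try ring.
  by rewrite hi; ring.
have Asplit : \sum_i \sum_j U i j * (p i - p j) ^+ 2 + \sum_i \sum_j U i j * (q i - q j) ^+ 2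
   <= \sum_i \sum_j U i j * (u i - u j) ^+ 2.
  rewrite -big_split /=; apply: ler_sum => i _; rewrite -big_split /=; apply: ler_sum => j _.
  rewrite -mulrDr; apply: ler_wpM2l => //.
  have -> : u i - u j = g i - g j by rewrite /g; ring.
  rewrite /p /q; case: (ltgtP (g i) 0) => hi; case: (ltgtP (g j) 0) => hj; nra.
rewrite Bsplit mulrDr; apply: le_trans Asplit; exact: lerD.
Qed.

End Gen.

Lemma term_le_dsum (R : rcfType) (n : nat) (F : 'I_n -> 'I_n -> R) a b :
  (forall i j, 0 <= F i j) -> F a b <= \sum_i \sum_j F i j.
Proof.
move=> H; rewrite (bigD1 a) //= (bigD1 b) //= -addrA lerDl.
apply: addr_ge0; first by apply: sumr_ge0.
by apply: sumr_ge0 => i _; apply: sumr_ge0.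
Qed.

Section Main.
Variables (R : rcfType) (n : nat) (W : 'M[R]_n) (S : {set 'I_n}).
Hypotheses (Wsym : forall i j, W i j = W j i) (Wge0 : forall i j, 0 <= W i j)
  (Wconn : forall i j, connect (fun a b => 0 < W a b) i j)
  (Smax : is_max_cut W S).

Local Notation Wc := (Wcut W S).
Local Notation Wu := (Wuncut W S).

Lemma WcE i j : Wc i j = if crosses S i j then W i j else 0.
Proof. by rewrite /Wcut mxE. Qed.

Lemma WuE i j : Wu i j = if crosses S i j then 0 else W i j.
Proof. by rewrite /Wuncut !mxE; case: (crosses S i j); rewrite ?subrr ?subr0. Qed.

Lemma Wc_sym i j : Wc i j = Wc j i.
Proof. by rewrite !WcE crosses_sym Wsym. Qed.
Lemma Wc_ge0 i j : 0 <= Wc i j.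
Proof. by rewrite WcE; case: ifP. Qed.
Lemma Wu_sym i j : Wu i j = Wu j i.
Proof. by rewrite !WuE crosses_sym Wsym. Qed.
Lemma Wu_ge0 i j : 0 <= Wu i j.
Proof. by rewrite WuE; case: ifP. Qed.

Lemma edge_out (A : {set 'I_n}) : A != set0 -> A != setT ->
  exists a b, [/\ a \in A, b \notin A & 0 < W a b].
Proof.
move=> /set0Pn [a aA] /negP AT.
case: (pickP (fun p : 'I_n * 'I_n => [&& p.1 \in A, p.2 \notin A & 0 < W p.1 p.2]))
  => [[x y] /and3P [? ? ?]|none]; first by exists x, y.
exfalso; apply: AT; apply/eqP/setP => b; rewrite inE.
have cl : closed (fun a b => 0 < W a b) A.
  move=> x y Hxy /=.
  case xA: (x \in A); case yA: (y \in A) => //.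
    by have := none (x, y); rewrite /= xA yA Hxy.
  by have := none (y, x); rewrite /= xA yA Wsym Hxy.
by rewrite -(closed_connect cl (Wconn a b)).
Qed.

Lemma tau_cut_pos (A : {set 'I_n}) : A != set0 -> A != setT -> 0 < tau Wc A.
Proof.
move=> A0 AT; rewrite lt0r (tau_ge0 Wc_sym Wc_ge0) andbT.
apply/negP => /eqP t0.
have Z : forall i j, (crosses A i j)%:R * Wc i j = 0.
  apply: dsum_eq0; first by move=> i j; apply: mulr_ge0 => //; exact: Wc_ge0.
  by rewrite -tauE ?t0 ?mulr0 //; exact: Wc_sym.
pose T := [set x | (x \in S) != (x \in A)].
have crT : forall i j, crosses T i j = (crosses S i j != crosses A i j).
  by move=> i j; rewrite /crosses !inE; case: (i \in S); case: (i \in A);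
     case: (j \in S); case: (j \in A).
have [a [b [aA bA Wab]]] := edge_out A0 AT.
have tW : 0 < tau W A.
  have : 0 < 2 * tau W A.
    rewrite tauE //; apply: lt_le_trans (term_le_dsum a b _).
      by rewrite /crosses aA (negbTE bA) mul1r.
    by move=> i j; apply: mulr_ge0.
  by rewrite pmulr_rgt0.
have E : 2 * cut_value W T = 2 * cut_value W S + 2 * tau W A.
  rewrite /cut_value -/(tau W T) -/(tau W S) !tauE // -big_split /=.
  apply eq_bigr => i _; rewrite -big_split /=; apply eq_bigr => j _.
  have := Z i j; rewrite WcE crT.
  case: (crosses S i j); case: (crosses A i j) => /= H;
    rewrite ?mul1r ?mul0r ?add0r ?addr0 // in H *.
  by rewrite H addr0.
have := Smax T; move: E tW; rewrite /cut_value. lra.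
Qed.

Lemma h_pos : 0 < cheeger Wc.
Proof.
rewrite /cheeger; elim/big_rec: _ => // A x /andP [A0 AT] hx; rewrite lt_min hx andbT.
have t := tau_cut_pos A0 AT.
apply: divr_gt0 => //; rewrite lt_min; apply/andP; split.
  apply: lt_le_trans t _; apply: tau_le_mu; exact: Wc_ge0.
apply: lt_le_trans t _; rewrite -(tauC Wc_sym A); apply: tau_le_mu; exact: Wc_ge0.
Qed.

Lemma xi_pos (i j : 'I_n) : i != j -> 0 < xi W S i.
Proof.
move=> ij.
have A0 : [set i] != set0 by apply/set0Pn; exists i; rewrite inE.
have AT : [set i] != setT.
  apply/negP => /eqP E; have : j \in [set i] by rewrite E inE.
  by rewrite inE eq_sym (negbTE ij).
have := tau_cut_pos A0 AT => t.
have : tau Wc [set i] <= mu Wc [set i] by apply: tau_le_mu; exact: Wc_ge0.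
rewrite /mu big_set1 /xi => H; exact: lt_le_trans t H.
Qed.


Definition sg (i : 'I_n) : R := if i \in S then 1 else -1.

Lemma sg2 i : sg i * sg i = 1.
Proof. by rewrite /sg; case: (i \in S); rewrite ?mulr1 ?mulrNN ?mulr1. Qed.

Lemma qformE (A : 'M[R]_n) (v : 'cV[R]_n) :
  (v^T *m A *m v) 0 0 = \sum_i \sum_j v i 0 * A i j * v j 0.
Proof.
rewrite mxE; under eq_bigr => j _ do rewrite mxE mulr_suml.
rewrite exchange_big /=; apply eq_bigr => i _; apply eq_bigr => j _; by rewrite mxE.
Qed.

Local Notation M := (W + Dprime W S).

Lemma ME i j : M i j = W i j + (i == j)%:R * (xi W S i - iota_w W S i).
Proof.
rewrite /Dprime /Dcut /Duncut !mxE /xi /iota_w.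
by case: (i == j); rewrite ?mulr1n ?mulr0n ?mul1r ?mul0r ?subrr.
Qed.

Lemma sum_delta (i : 'I_n) (F : 'I_n -> R) : \sum_j (i == j)%:R * F j = F i.
Proof.
rewrite (bigD1 i) //= eqxx mul1r big1 ?addr0 // => j ji.
by rewrite eq_sym (negbTE ji) mul0r.
Qed.

Definition Q (x : 'I_n -> R) := \sum_i \sum_j x i * M i j * x j.

Lemma QE (x : 'I_n -> R) :
  Q x = \sum_i \sum_j W i j * (x i * x j) + \sum_i (xi W S i - iota_w W S i) * x i ^+ 2.
Proof.
rewrite /Q -big_split /=; apply eq_bigr => i _.
transitivity (\sum_j (W i j * (x i * x j) + (i == j)%:R * ((xi W S i - iota_w W S i) * x i * x j))).
  by apply eq_bigr => j _; rewrite ME; ring.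
by rewrite big_split /= sum_delta; congr (_ + _); ring.
Qed.

Definition Emx : 'M[R]_n := Wc - Wu.

Lemma EmxE i j : Emx i j = Wc i j - Wu i j.
Proof. by rewrite /Emx !mxE. Qed.

Lemma Emx_sym i j : Emx i j = Emx j i.
Proof. by rewrite !EmxE Wc_sym Wu_sym. Qed.

Lemma deg_Emx i : deg Emx i = xi W S i - iota_w W S i.
Proof. by rewrite /deg /xi /iota_w -sumrB; apply eq_bigr => j _; rewrite EmxE. Qed.

Lemma Q_ident (x : 'I_n -> R) :
  2 * Q x = \sum_i \sum_j Wc i j * (sg i * x i - sg j * x j) ^+ 2
          - \sum_i \sum_j Wu i j * (sg i * x i - sg j * x j) ^+ 2.
Proof.
rewrite -sumrB.
transitivity (\sum_i \sum_j (2 * (W i j * (x i * x j)) + 1 * (Emx i j * x i ^+ 2)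
    + 1 * (Emx i j * x j ^+ 2))).
  rewrite sum3 !mul1r sum_symL (sum_symR Emx_sym) QE.
  have E : \sum_i deg Emx i * x i ^+ 2 = \sum_i (xi W S i - iota_w W S i) * x i ^+ 2.
    by apply eq_bigr => i _; rewrite deg_Emx.
  rewrite E; ring.
apply eq_bigr => i _; rewrite -sumrB; apply eq_bigr => j _.
rewrite EmxE WcE WuE /crosses /sg.
by case: (i \in S); case: (j \in S) => /=; ring.
Qed.

Lemma core (x : 'I_n -> R) (i0 : 'I_n) (gamma : R) :
  (forall x, gamma * iota_w W S x <= xi W S x) ->
  2 / (1 - Num.sqrt (1 - cheeger Wc ^+ 2)) < gamma ->
  0 <= Q x /\ (Q x = 0 -> exists c, forall i, sg i * x i = c).
Proof.
move=> Hg Hgam.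
set lam := 1 - Num.sqrt (1 - cheeger Wc ^+ 2) in Hgam.
have hp := h_pos.
have h1 : cheeger Wc <= 1 := h_le1 Wc.
have lam0 : 0 < lam.
  rewrite /lam subr_gt0 -[X in _ < X]sqrtr1 ltr_sqrt ?ltr01 //.
  by rewrite gtrDl oppr_lt0 exprn_gt0.
have glam : 2 < gamma * lam by move: Hgam; rewrite ltr_pdivrMr.
have gam0 : 0 < gamma.
  have : 0 < gamma * lam by apply: lt_trans glam; exact: ltr0Sn.
  by rewrite pmulr_lgt0.
pose u i := sg i * x i.
have [c Hc] := spectral Wc_sym Wc_ge0 u i0.
set P := \sum_i deg Wc i * (u i - c) ^+ 2 in Hc.
set I := \sum_i deg Wu i * (u i - c) ^+ 2.
have P0 : 0 <= P.
  apply: sumr_ge0 => i _; apply: mulr_ge0; [exact: deg_ge0 Wc_ge0 i | exact: sqr_ge0].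
have Hu : \sum_i \sum_j Wu i j * (u i - u j) ^+ 2 <= 4 * I.
  apply: (@le_trans _ _ (\sum_i \sum_j (2 * (Wu i j * (u i - c) ^+ 2) + 2 * (Wu i j * (u j - c) ^+ 2)
     + 0 * (Wu i j)))).
    apply: ler_sum => i _; apply: ler_sum => j _.
    have key : (u i - u j) ^+ 2 <= 2 * (u i - c) ^+ 2 + 2 * (u j - c) ^+ 2.
      have : 0 <= (u i + u j - 2 * c) ^+ 2 by exact: sqr_ge0.
      move=> H; rewrite -subr_ge0; apply: (le_trans H); rewrite le_eqVlt; apply/orP; left.
      apply/eqP; ring.
    have := ler_wpM2l (Wu_ge0 i j) key; rewrite mul0r addr0 => H; lra.
  rewrite sum3 sum_symL (sum_symR Wu_sym) mul0r addr0 -/I le_eqVlt; apply/orP; left; apply/eqP; ring.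
have HP : gamma * I <= P.
  rewrite /I mulr_sumr; apply: ler_sum => i _; rewrite mulrA; apply: ler_wpM2r.
    exact: sqr_ge0.
  exact: Hg.
have HQ : 2 * lam * P - 4 * I <= 2 * Q x.
  rewrite Q_ident; apply: lerB; [exact: Hc | exact: Hu].
have f1 : gamma * (2 * lam * P - 4 * I) <= gamma * (2 * Q x) by rewrite ler_pM2l.
have f3 : 0 <= (gamma * lam - 2) * P by apply: mulr_ge0 => //; lra.
have key : (gamma * lam - 2) * P <= gamma * Q x.
  move: f1 f3 HP; rewrite !mulrDr !mulrDl !mulrN !mulNr; lra.
split.
  have : 0 <= gamma * Q x by exact: le_trans f3 key.
  by rewrite pmulr_rge0.
move=> Q0; move: key; rewrite Q0 mulr0 => key.
have Pz : P = 0.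
  apply/eqP; rewrite eq_le P0 andbT.
  by move: key; rewrite pmulr_rle0 // subr_gt0.
case: (pickP (fun j => j != i0)) => [j ji0 | none]; last first.
  exists (u i0) => i; have := none i; rewrite /= => /negbFE/eqP ->; done.
exists c => i.
have other : exists k, k != i.
  case: (eqVneq i i0) => [->|ii0]; [by exists j | by exists i0; rewrite eq_sym].
have [k ki] := other.
have xp : 0 < xi W S i by apply: (xi_pos (j := k)); rewrite eq_sym.
have H0 := @psumr_eq0P _ _ _ _ (fun i _ => mulr_ge0 (deg_ge0 Wc_ge0 i) (sqr_ge0 (u i - c))) Pz i isT.
change (xi W S i * (u i - c) ^+ 2 = 0) in H0.
move/eqP: H0; rewrite mulf_eq0 (negbTE (lt0r_neq0 xp)) /= sqrf_eq0 subr_eq0 => /eqP.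
done.
Qed.

End Main.

Theorem lemma2 (R : rcfType) (n : nat) (W : 'M[R]_n) (S : {set 'I_n}) (gamma : R) :
  maxcut_instance W ->
  is_max_cut W S ->
  (forall x, gamma * iota_w W S x <= xi W S x) ->
  2 / (1 - Num.sqrt (1 - cheeger (Wcut W S) ^+ 2)) < gamma ->
  psd (W + Dprime W S) /\ \rank (W + Dprime W S)%R = n.-1.
Proof.
move=> [Wsym Wge0 _ Wconn] Smax Hg Hgam.
case: (posnP n) => [n0 | npos].
  split.
    move=> v; rewrite qformE big1 // => i; exfalso; by case: i => m; rewrite n0.
  have := rank_leq_col (W + Dprime W S); lia.
pose i0 := Ordinal npos.
have coreP := fun x => core Wsym Wge0 Wconn Smax x i0 Hg Hgam.
split.
  move=> v; rewrite qformE; exact: (coreP (fun i => v i 0)).1.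
set M := W + Dprime W S.
pose s : 'rV[R]_n := \row_i sg R S i.
have sM : s *m M = 0.
  apply/rowP => j; rewrite !mxE.
  transitivity (\sum_i (sg R S i * W i j + (i == j)%:R * (sg R S i * (xi W S i - iota_w W S i)))).
    by apply eq_bigr => i _; rewrite mxE ME; ring.
  have Ed : \sum_i (i == j)%:R * (sg R S i * (xi W S i - iota_w W S i)) =
     sg R S j * (xi W S j - iota_w W S j).
    rewrite (bigD1 j) //= eqxx mul1r big1 ?addr0 // => i ij.
    by rewrite (negbTE ij) mul0r.
  rewrite big_split /= Ed /xi /iota_w -sumrB mulr_sumr -big_split /= big1 // => i _.
  rewrite (Wc_sym S Wsym) (Wu_sym S Wsym) WcE WuE /crosses /sg.
  by case: (i \in S); case: (j \in S) => /=; ring.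
set K := kermx M.
have sK : (s <= K)%MS by rewrite sub_kermx sM.
have Ks : (K <= s)%MS.
  apply/row_subP => i; apply/sub_rVP.
  set r := row i K.
  have rM : r *m M = 0 by rewrite /r -row_mul mulmx_ker row0.
  have Q0 : Q W S (fun k => r 0 k) = 0.
    have := qformE M r^T; rewrite trmxK rM mul0mx mxE /=.
    move=> H; rewrite /Q [RHS]H; apply eq_bigr => a _; apply eq_bigr => b _; by rewrite !mxE.
  have [c Hc] := (coreP (fun k => r 0 k)).2 Q0.
  exists c; apply/rowP => k; rewrite [RHS]mxE [s 0 k]mxE.
  by rewrite -(Hc k) mulrC mulrA sg2 mul1r.
have rs : \rank s = 1%N.
  rewrite rank_rV; apply/eqP; rewrite eqb1; apply/eqP => /rowP /(_ i0).
  rewrite !mxE /sg; case: (i0 \in S) => /eqP; rewrite ?oner_eq0 ?oppr_eq0 ?oner_eq0 //.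
have rK : \rank K = 1%N.
  by apply/eqP; rewrite eqn_leq -{1}rs (mxrankS Ks) -rs (mxrankS sK).
have := mxrank_ker M; rewrite -/K rK.
have := rank_leq_col M.
lia.
Qed.
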